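(* The Uniform Price Auction is incentive compatible (with public budgets), never charges an agent more than its budget, and for every input its allocation $x$ satisfies $\bar W(x)\ge\frac12\bar W^*$.
   Context: Uniform Price Auction: one unit of a divisible good, $n$ agents with values per unit $v_i>0$ and publicly known budgets $B_i>0$. Relabel agents so that $v_1\ge\dots\ge v_n$ and set $v_{n+1}=0$. Let $k\in\{0,\dots,n\}$ be the largest integer with $\sum_{j=1}^kB_j\le v_k$ (the empty sum is $0$, and $k=0$ is always admissible). Case I: if $\sum_{j=1}^kB_j>v_{k+1}$, allocate $x_i=B_i/\sum_{j=1}^kB_j$ for $i\le k$ and $0$ to everyone else. Case II: if $\sum_{j=1}^kB_j\le v_{k+1}$, allocate $x_i=B_i/v_{k+1}$ for $i\le k$, $x_{k+1}=1-\sum_{j=1}^kx_j$, and $0$ to everyone else. Payments are given by Myerson's formula $\pi_i(v)=v_ix_i(v)-\int_0^{v_i}x_i(u,v_{-i})\,du$. Agent utility is $v_ix_i-\pi_i$ if $\pi_i\le B_i$ and $-\infty$ otherwise; incentive compatibility means truthfully reporting the value maximizes utility for all reports of others. Liquid welfare: $\bar W(x)=\sum_i\min\{v_ix_i,B_i\}$; $\bar W^*=\max\{\bar W(x):x\in\mathbb R^n_{\ge0},\sum_ix_i=1\}$. *)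

(* Defs.v *)
From Stdlib Require Import Reals ClassicalEpsilon.
Open Scope R_scope.

(* Agents are indexed by 0 .. n-1; profiles are functions nat -> R
   (entries at indices >= n are ignored). *)

Fixpoint sumR (m : nat) (f : nat -> R) : R :=
  match m with
  | O => 0
  | S m' => sumR m' f + f m'
  end.

Fixpoint countN (m : nat) (p : nat -> bool) : nat :=
  match m with
  | O => O
  | S m' => (countN m' p + (if p m' then 1 else 0))%nat
  end.

(* Agent j is placed before agent i in the sorted order v_1 >= ... >= v_n:
   higher value first, ties broken by smaller index. *)
Definition before (v : nat -> R) (j i : nat) : bool :=
  if Rlt_dec (v i) (v j) then true
  else if Req_EM_T (v j) (v i) then Nat.ltb j i else false.

(* 0-based position of agent i in the sorted order *)
Definition rank (n : nat) (v : nat -> R) (i : nat) : nat :=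
  countN n (fun j => before v j i).

(* sum_{j=1}^m B_j  (sorted, 1-based) *)
Definition prefB (n : nat) (B v : nat -> R) (m : nat) : R :=
  sumR n (fun j => if Nat.ltb (rank n v j) m then B j else 0).

(* v_r (sorted, 1-based); v_{n+1} = 0 automatically *)
Definition vsorted (n : nat) (v : nat -> R) (r : nat) : R :=
  sumR n (fun j => if Nat.eqb (S (rank n v j)) r then v j else 0).

(* largest k in {0..n} with k = 0 or sum_{j<=k} B_j <= v_k *)
Fixpoint kaux (n : nat) (B v : nat -> R) (m : nat) : nat :=
  match m with
  | O => O
  | S m' => if Rle_dec (prefB n B v m) (vsorted n v m) then m else kaux n B v m'
  end.

Definition kstar (n : nat) (B v : nat -> R) : nat := kaux n B v n.

Definition alloc (n : nat) (B v : nat -> R) (i : nat) : R :=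
  let k := kstar n B v in
  let T := prefB n B v k in
  let w := vsorted n v (S k) in
  if Rlt_dec w T then
    (if Nat.ltb (rank n v i) k then B i / T else 0)
  else
    (if Nat.ltb (rank n v i) k then B i / w
     else if Nat.eqb (rank n v i) k then
       1 - sumR n (fun j => if Nat.ltb (rank n v j) k then B j / w else 0)
     else 0).

(* Riemann integral of f over [a,b] (arbitrary value if f is not integrable) *)
Definition integral (f : R -> R) (a b : R) : R :=
  epsilon (inhabits 0) (fun I => exists pr : Riemann_integrable f a b, RiemannInt pr = I).

Definition upd (v : nat -> R) (i : nat) (u : R) : nat -> R :=
  fun j => if Nat.eqb j i then u else v j.

Definition pay (n : nat) (B v : nat -> R) (i : nat) : R :=
  v i * alloc n B v i - integral (fun u => alloc n B (upd v i u) i) 0 (v i).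

(* utility in R U {-oo}; None stands for -oo *)
Definition utility (n : nat) (B b : nat -> R) (i : nat) (vi : R) : option R :=
  if Rle_dec (pay n B b i) (B i) then Some (vi * alloc n B b i - pay n B b i) else None.

Definition ole (a b : option R) : Prop :=
  match a, b with
  | None, _ => True
  | Some _, None => False
  | Some x, Some y => x <= y
  end.

Definition LW (n : nat) (v B x : nat -> R) : R :=
  sumR n (fun i => Rmin (v i * x i) (B i)).

Definition feasible (n : nat) (x : nat -> R) : Prop :=
  (forall i, (i < n)%nat -> 0 <= x i) /\ sumR n x = 1.

Definition is_opt_LW (n : nat) (v B : nat -> R) (W : R) : Prop :=
  (exists x, feasible n x /\ LW n v B x = W) /\
  (forall x, feasible n x -> LW n v B x <= W).

(* Main.v *)
Require Import Defs.
From Stdlib Require Import Reals Lra Lia Psatz ClassicalEpsilon RList RiemannInt_SF RiemannInt List FinFun Bool FunctionalExtensionality.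
Open Scope R_scope.
Import ListNotations.

Lemma sumR_shift : forall N f, sumR (S N) f = f 0%nat + sumR N (fun i => f (S i)).
Proof.
  induction N; intros f; simpl. lra.
  simpl in IHN. rewrite IHN. lra.
Qed.

Lemma sumR_ext : forall n f g, (forall j, (j < n)%nat -> f j = g j) -> sumR n f = sumR n g.
Proof.
  induction n; intros f g H; simpl; auto.
  rewrite (IHn f g) by (intros; apply H; lia). rewrite H by lia. reflexivity.
Qed.

Lemma sumR_telescope : forall N g, sumR N (fun i => g (S i) - g i) = g N - g 0%nat.
Proof. induction N; intros g; simpl. lra. rewrite IHN. lra. Qed.

Lemma sumR_scal : forall n c f, sumR n (fun i => c * f i) = c * sumR n f.
Proof. induction n; intros; simpl. lra. rewrite IHn. lra. Qed.

Fixpoint mkl (h : nat -> R) (N : nat) : list R :=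
  match N with O => h 0%nat :: nil | S N' => h 0%nat :: mkl (fun i => h (S i)) N' end.
Fixpoint mkv (h : nat -> R) (N : nat) : list R :=
  match N with O => nil | S N' => h 0%nat :: mkv (fun i => h (S i)) N' end.

Lemma mkl_len : forall N h, length (mkl h N) = S N.
Proof. induction N; intros; simpl; auto. Qed.
Lemma mkv_len : forall N h, length (mkv h N) = N.
Proof. induction N; intros; simpl; auto. Qed.
Lemma mkl_pos : forall N h i, (i <= N)%nat -> pos_Rl (mkl h N) i = h i.
Proof.
  induction N; intros h i Hi.
  - assert (i = 0%nat) by lia; subst; reflexivity.
  - destruct i; simpl; auto. rewrite IHN by lia. reflexivity.
Qed.
Lemma mkv_pos : forall N h i, (i < N)%nat -> pos_Rl (mkv h N) i = h i.
Proof.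
  induction N; intros h i Hi. lia.
  destruct i; simpl; auto. rewrite IHN by lia. reflexivity.
Qed.
Lemma mkl_head : forall N h, exists r, mkl h N = h 0%nat :: r.
Proof. destruct N; intros; simpl; eauto. Qed.

Lemma Int_SF_mk : forall N h F,
  Int_SF (mkv F N) (mkl h N) = sumR N (fun i => F i * (h (S i) - h i)).
Proof.
  induction N; intros h F. reflexivity.
  rewrite sumR_shift. simpl.
  destruct (mkl_head N (fun i => h (S i))) as [r Hr].
  rewrite Hr. rewrite <- Hr. rewrite IHN. reflexivity.
Qed.

Lemma find_interval : forall N (h : nat -> R) t,
  h 0%nat <= t -> t < h N -> exists i, (i < N)%nat /\ h i <= t < h (S i).
Proof.
  induction N; intros h t H0 H1. lra.
  destruct (Rlt_dec t (h N)) as [Hl|Hl].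
  - destruct (IHN h t H0 Hl) as [i [Hi1 Hi2]]. exists i. split; [lia|auto].
  - exists N. split; [lia|]. lra.
Qed.

Lemma mono_integrable : forall f a b, a <= b ->
  (forall x y, a <= x -> x <= y -> y <= b -> f x <= f y) -> Riemann_integrable f a b.
Proof.
  intros f a b Hab Hm.
  destruct (Req_EM_T a b) as [Heq|Hne].
  { subst. apply RiemannInt_P7. }
  assert (Hlt : a < b) by lra.
  intro eps.
  assert (Hfab : f a <= f b) by (apply Hm; lra).
  destruct (constructive_indefinite_description _ (INR_unbounded ((b - a) * (f b - f a) / eps))) as [N0 HN0].
  set (N := S N0).
  assert (HN : 0 < INR N) by (unfold N; rewrite S_INR; pose proof (pos_INR N0); lra).
  assert (HN' : INR N > (b - a) * (f b - f a) / eps)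
    by (unfold N; rewrite S_INR; lra).
  set (d := (b - a) / INR N).
  assert (Hd : 0 < d) by (unfold d; apply Rdiv_lt_0_compat; lra).
  set (h := fun i : nat => a + INR i * d).
  assert (hN : h N = b) by (unfold h, d; field; lra).
  assert (h0 : h 0%nat = a) by (unfold h; simpl; lra).
  assert (hS : forall i, h (S i) = h i + d) by (intros; unfold h; rewrite S_INR; lra).
  assert (hle : forall i, (i <= N)%nat -> a <= h i <= b).
  { intros i Hi. unfold h. split.
    - pose proof (pos_INR i). nra.
    - apply le_INR in Hi. rewrite <- hN. unfold h. nra. }
  assert (Hord : ordered_Rlist (mkl h N)).
  { intros i Hi. rewrite mkl_len in Hi. simpl in Hi.
    rewrite !mkl_pos by lia. rewrite hS. lra. }
  assert (Hp0 : pos_Rl (mkl h N) 0 = a) by (rewrite mkl_pos by lia; auto).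
  assert (HpN : pos_Rl (mkl h N) (pred (length (mkl h N))) = b)
    by (rewrite mkl_len; simpl; rewrite mkl_pos by lia; auto).
  set (D := fun t => f (Rmin (t + d) b) - f t).
  destruct (StepFun_P38 f Hord Hp0 HpN) as [phi [Hphib Hphi]].
  destruct (StepFun_P38 D Hord Hp0 HpN) as [psi [Hpsib Hpsi]].
  exists phi, psi.
  assert (Hint : RiemannInt_SF psi = d * (f b - f a)).
  { assert (Had : adapted_couple psi a b (mkl h N) (mkv (fun i => D (h i)) N)).
    { unfold adapted_couple. rewrite Rmin_left by lra. rewrite Rmax_right by lra.
      repeat split; auto.
      - rewrite mkl_len, mkv_len. reflexivity.
      - intros i Hi. rewrite mkl_len in Hi. simpl in Hi.
        intros x Hx. rewrite mkv_pos by lia.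
        assert (Hi' : (i < Init.Nat.pred (length (mkl h N)))%nat) by (rewrite mkl_len; simpl; lia).
        assert (Hx' : co_interval (pos_Rl (mkl h N) i) (pos_Rl (mkl h N) (S i)) x)
          by (unfold open_interval in Hx; unfold co_interval; lra).
        rewrite (Hpsi i Hi' x Hx'). rewrite mkl_pos by lia. reflexivity. }
    unfold RiemannInt_SF. destruct (Rle_dec a b) as [_|Hn]; [|lra].
    rewrite (StepFun_P17 (StepFun_P1 psi) Had).
    rewrite Int_SF_mk.
    rewrite (sumR_ext N _ (fun i => d * (f (h (S i)) - f (h i)))).
    - rewrite sumR_scal. rewrite (sumR_telescope N (fun i => f (h i))).
      rewrite hN, h0. reflexivity.
    - intros j Hj. unfold D. rewrite Rmin_left.
      + rewrite hS. ring.
      + rewrite <- hS. apply hle. lia. }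
  split.
  - intros t Ht. rewrite Rmin_left in Ht by lra. rewrite Rmax_right in Ht by lra.
    destruct (Req_dec t b) as [Htb|Htb].
    + subst t. rewrite Hphib, Hpsib. unfold D. rewrite Rmin_right by lra.
      rewrite Rminus_diag, Rabs_R0. lra.
    + destruct (find_interval N h t) as [i [Hi1 Hi2]]; try lra.
      assert (Hi' : (i < Init.Nat.pred (length (mkl h N)))%nat) by (rewrite mkl_len; simpl; lia).
      assert (Hx' : co_interval (pos_Rl (mkl h N) i) (pos_Rl (mkl h N) (S i)) t)
        by (unfold co_interval; rewrite !mkl_pos by lia; lra).
      rewrite (Hphi i Hi' t Hx'), (Hpsi i Hi' t Hx').
      rewrite mkl_pos by lia. unfold D.
      rewrite Rmin_left by (rewrite <- hS; apply hle; lia).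
      rewrite <- hS.
      assert (f (h i) <= f t) by (apply Hm; try lra; apply hle; lia).
      assert (f t <= f (h (S i))) by (apply Hm; try lra; apply hle; lia).
      rewrite Rabs_right by lra. lra.
  - rewrite Hint. rewrite Rabs_right by (apply Rle_ge; nra).
    pose proof (cond_pos eps) as He. set (e := pos eps) in *.
    assert (X : (b-a)*(f b - f a) < INR N * e).
    { replace ((b-a)*(f b - f a)) with (((b-a)*(f b - f a)/e)*e) by (field; lra).
      apply Rmult_lt_compat_r; lra. }
    unfold d.
    replace ((b - a) / INR N * (f b - f a)) with (((b-a)*(f b - f a)) * / INR N) by (field; lra).
    apply (Rmult_lt_reg_r (INR N)); auto.
    replace ((b - a) * (f b - f a) * / INR N * INR N) with ((b - a) * (f b - f a)) by (field; lra).
    lra.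
Qed.

Lemma integral_eq : forall f a b (pr : Riemann_integrable f a b), integral f a b = RiemannInt pr.
Proof.
  intros f a b pr. unfold integral.
  destruct (epsilon_spec (inhabits 0) (fun I => exists pr : Riemann_integrable f a b, RiemannInt pr = I)) as [pr' Hpr'].
  { exists (RiemannInt pr). exists pr. reflexivity. }
  rewrite <- Hpr'. apply RiemannInt_P5.
Qed.

Ltac bef := unfold before in *;
  repeat match goal with
  | |- context [Rlt_dec ?x ?y] => destruct (Rlt_dec x y)
  | H : context [Rlt_dec ?x ?y] |- _ => destruct (Rlt_dec x y)
  | |- context [Req_EM_T ?x ?y] => destruct (Req_EM_T x y)
  | H : context [Req_EM_T ?x ?y] |- _ => destruct (Req_EM_T x y)
  | |- context [Nat.ltb ?x ?y] => destruct (Nat.ltb_spec x y)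
  | H : context [Nat.ltb ?x ?y] |- _ => destruct (Nat.ltb_spec x y)
  end; try lra; try lia; try discriminate; auto.

Lemma before_irrefl v i : before v i i = false.
Proof. bef. Qed.
Lemma before_asym v i j : before v j i = true -> before v i j = false.
Proof. intros; bef. Qed.
Lemma before_total v i j : i <> j -> before v j i = true \/ before v i j = true.
Proof. intros; bef. Qed.
Lemma before_trans v a b c : before v a b = true -> before v b c = true -> before v a c = true.
Proof. intros; bef. Qed.
Lemma before_le v j i : before v j i = true -> v i <= v j.
Proof. intros; bef. Qed.
Lemma lt_before v j i : v i < v j -> before v j i = true.
Proof. intros; bef. Qed.

Lemma countN_le n p : (countN n p <= n)%nat.
Proof. induction n; simpl; auto. destruct (p n); lia. Qed.
Lemma countN_mono n p q : (forall j, (j < n)%nat -> p j = true -> q j = true) ->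
  (countN n p <= countN n q)%nat.
Proof.
  induction n; intros H; simpl; auto.
  assert (IH := IHn (fun j (Hj : (j < n)%nat) => H j ltac:(lia))).
  specialize (H n ltac:(lia)). destruct (p n), (q n); try lia; discriminate (H eq_refl).
Qed.
Lemma countN_strict n p q : (forall j, (j < n)%nat -> p j = true -> q j = true) ->
  (exists j, (j < n)%nat /\ p j = false /\ q j = true) ->
  (countN n p < countN n q)%nat.
Proof.
  induction n; intros H [j [Hj [Hp Hq]]]. lia.
  simpl. destruct (Nat.eq_dec j n).
  - subst. rewrite Hp, Hq. pose proof (countN_mono n p q (fun j (Hj : (j < n)%nat) => H j ltac:(lia))). lia.
  - assert (IH : (countN n p < countN n q)%nat).
    { apply IHn. intros x Hx; apply H; lia. exists j. repeat split; auto; lia. }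
    specialize (H n ltac:(lia)). destruct (p n), (q n); try lia; discriminate (H eq_refl).
Qed.
Lemma countN_ext n p q : (forall j, (j < n)%nat -> p j = q j) -> countN n p = countN n q.
Proof.
  induction n; intros H; simpl; auto. rewrite (IHn (fun j (Hj : (j < n)%nat) => H j ltac:(lia))), H by lia. auto.
Qed.
Lemma countN_true n : countN n (fun _ => true) = n.
Proof. induction n; simpl; lia. Qed.
Lemma countN_INR n p : INR (countN n p) = sumR n (fun j => if p j then 1 else 0).
Proof. induction n; simpl; auto. rewrite plus_INR, IHn. destruct (p n); simpl; lra. Qed.
Lemma countN_ltb n m : countN n (fun r => Nat.ltb r m) = Nat.min n m.
Proof. induction n; [reflexivity|]. cbn [countN]. rewrite IHn. destruct (Nat.ltb_spec n m); lia. Qed.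

Lemma sumR_le n f g : (forall j, (j < n)%nat -> f j <= g j) -> sumR n f <= sumR n g.
Proof.
  induction n; intros H; simpl. lra.
  pose proof (IHn (fun j (Hj : (j < n)%nat) => H j ltac:(lia))). pose proof (H n ltac:(lia)). lra.
Qed.
Lemma sumR_plus n f g : sumR n (fun j => f j + g j) = sumR n f + sumR n g.
Proof. induction n; simpl. lra. rewrite IHn. lra. Qed.
Lemma sumR_zero n f : (forall j, (j < n)%nat -> f j = 0) -> sumR n f = 0.
Proof.
  induction n; intros H; simpl; auto. rewrite (IHn (fun j (Hj : (j < n)%nat) => H j ltac:(lia))), H by lia. lra.
Qed.
Lemma sumR_single n f a : (a < n)%nat -> (forall j, (j < n)%nat -> j <> a -> f j = 0) -> sumR n f = f a.
Proof.
  induction n; intros Ha H. lia. simpl.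
  destruct (Nat.eq_dec a n).
  - subst. rewrite sumR_zero. lra. intros j Hj; apply H; lia.
  - rewrite IHn by (try lia; intros; apply H; lia). rewrite (H n) by lia. lra.
Qed.
Lemma sumR_nonneg n f : (forall j, (j < n)%nat -> 0 <= f j) -> 0 <= sumR n f.
Proof. intros H. rewrite <- (sumR_zero n (fun _ => 0)) by auto. apply sumR_le. auto. Qed.
Lemma sumR_swap n m F : sumR n (fun i => sumR m (fun j => F i j)) = sumR m (fun j => sumR n (fun i => F i j)).
Proof.
  induction n; simpl. symmetry; apply sumR_zero; auto.
  rewrite IHn. rewrite <- sumR_plus. reflexivity.
Qed.

Lemma sumR_reindex n h G : bFun n h -> bInjective n h ->
  sumR n (fun j => G (h j)) = sumR n G.
Proof.
  intros Hf Hi.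
  assert (Hs : bSurjective n h) by (apply (proj1 (@bInjective_bSurjective n h Hf)); auto).
  transitivity (sumR n (fun j => sumR n (fun r => if Nat.eqb (h j) r then G r else 0))).
  - apply sumR_ext. intros j Hj. symmetry.
    rewrite (sumR_single n _ (h j)) by (auto; intros r Hr Hne; destruct (Nat.eqb_spec (h j) r); congruence).
    rewrite Nat.eqb_refl. auto.
  - rewrite sumR_swap. apply sumR_ext. intros r Hr.
    destruct (Hs r Hr) as [j [Hj Hjr]].
    rewrite (sumR_single n _ j) by (auto; intros l Hl Hne; destruct (Nat.eqb_spec (h l) r); auto;
       exfalso; apply Hne; apply Hi; congruence).
    rewrite Hjr, Nat.eqb_refl. auto.
Qed.

Lemma rank_lt n v i : (i < n)%nat -> (rank n v i < n)%nat.
Proof.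
  intros Hi. unfold rank. rewrite <- (countN_true n) at 2.
  apply countN_strict; auto. exists i. rewrite before_irrefl. auto.
Qed.

Lemma rank_lt_before n v j l : (j < n)%nat -> before v j l = true -> (rank n v j < rank n v l)%nat.
Proof.
  intros Hj H. unfold rank. apply countN_strict.
  - intros x Hx Hxj. eapply before_trans; eauto.
  - exists j. rewrite before_irrefl. auto.
Qed.

Lemma rank_before_iff n v j l : (j < n)%nat -> (l < n)%nat ->
  ((rank n v j < rank n v l)%nat <-> before v j l = true).
Proof.
  intros Hj Hl. split; [|apply rank_lt_before; auto].
  intros H. destruct (Nat.eq_dec j l). subst; lia.
  destruct (before_total v l j (not_eq_sym n0)) as [H1|H1]; auto.
  pose proof (rank_lt_before n v l j Hl H1). lia.
Qed.

Lemma rank_inj n v j l : (j < n)%nat -> (l < n)%nat -> rank n v j = rank n v l -> j = l.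
Proof.
  intros Hj Hl H. destruct (Nat.eq_dec j l); auto.
  destruct (before_total v l j (not_eq_sym n0)) as [H1|H1].
  - pose proof (rank_lt_before n v j l Hj H1). lia.
  - pose proof (rank_lt_before n v l j Hl H1). lia.
Qed.

Lemma rank_surj n v r : (r < n)%nat -> exists j, (j < n)%nat /\ rank n v j = r.
Proof.
  intros Hr. refine (proj1 (@bInjective_bSurjective n (rank n v) _) _ r Hr).
  - intros x Hx. apply rank_lt; auto.
  - intros x y Hx Hy. apply rank_inj; auto.
Qed.

Lemma sumR_rank n v G : sumR n (fun j => G (rank n v j)) = sumR n G.
Proof.
  apply sumR_reindex.
  - intros x Hx. apply rank_lt; auto.
  - intros x y Hx Hy. apply rank_inj; auto.
Qed.

Lemma count_top n v m : (m <= n)%nat -> countN n (fun j => Nat.ltb (rank n v j) m) = m.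
Proof.
  intros Hm. apply INR_eq. rewrite countN_INR.
  rewrite (sumR_rank n v (fun r => if Nat.ltb r m then 1 else 0)).
  rewrite <- countN_INR, countN_ltb. f_equal. lia.
Qed.

Lemma prefB_S n B v m a : (a < n)%nat -> rank n v a = m ->
  prefB n B v (S m) = prefB n B v m + B a.
Proof.
  intros Ha Hr. unfold prefB.
  rewrite (sumR_ext n _ (fun j => (if Nat.ltb (rank n v j) m then B j else 0) +
                                  (if Nat.eqb (rank n v j) m then B j else 0))).
  - rewrite sumR_plus. f_equal. rewrite (sumR_single n _ a Ha).
    + rewrite Hr, Nat.eqb_refl. auto.
    + intros j Hj Hne. destruct (Nat.eqb_spec (rank n v j) m); auto.
      exfalso; apply Hne; apply (rank_inj n v); congruence.
  - intros j Hj. destruct (Nat.ltb_spec (rank n v j) (S m)), (Nat.ltb_spec (rank n v j) m),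
      (Nat.eqb_spec (rank n v j) m); try lia; lra.
Qed.

Lemma prefB_0 n B v : prefB n B v 0 = 0.
Proof. unfold prefB. apply sumR_zero. intros j _. destruct (Nat.ltb_spec (rank n v j) 0); lia || auto. Qed.

Lemma prefB_mono n B v m1 m2 : (forall j, (j < n)%nat -> 0 <= B j) -> (m1 <= m2)%nat ->
  prefB n B v m1 <= prefB n B v m2.
Proof.
  intros HB Hm. unfold prefB. apply sumR_le. intros j Hj.
  specialize (HB j Hj).
  destruct (Nat.ltb_spec (rank n v j) m1), (Nat.ltb_spec (rank n v j) m2); lra || lia.
Qed.

Lemma prefB_nonneg n B v m : (forall j, (j < n)%nat -> 0 <= B j) -> 0 <= prefB n B v m.
Proof.
  intros HB. unfold prefB. apply sumR_nonneg. intros j Hj. specialize (HB j Hj).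
  destruct (Nat.ltb (rank n v j) m); lra.
Qed.

Lemma vsorted_rank n v j : (j < n)%nat -> vsorted n v (S (rank n v j)) = v j.
Proof.
  intros Hj. unfold vsorted. rewrite (sumR_single n _ j Hj).
  - rewrite Nat.eqb_refl. auto.
  - intros l Hl Hne. destruct (Nat.eqb_spec (S (rank n v l)) (S (rank n v j))); auto.
    exfalso; apply Hne; apply (rank_inj n v); auto; lia.
Qed.

Lemma vsorted_out n v m : (n < m)%nat \/ m = 0%nat -> vsorted n v m = 0.
Proof.
  intros H. unfold vsorted. apply sumR_zero. intros j Hj.
  pose proof (rank_lt n v j Hj). destruct (Nat.eqb_spec (S (rank n v j)) m); auto. lia.
Qed.

Lemma vsorted_at n v m : (1 <= m <= n)%nat -> exists a, (a < n)%nat /\ rank n v a = pred m /\ vsorted n v m = v a.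
Proof.
  intros Hm. destruct (rank_surj n v (pred m)) as [a [Ha Hr]]. lia.
  exists a. repeat split; auto. replace m with (S (rank n v a)) by lia. apply vsorted_rank; auto.
Qed.

Lemma rank_le_val n v j l : (j < n)%nat -> (l < n)%nat -> (rank n v j <= rank n v l)%nat -> v l <= v j.
Proof.
  intros Hj Hl H. destruct (Nat.eq_dec j l). subst; lra.
  assert (rank n v j < rank n v l)%nat. { assert (rank n v j <> rank n v l) by (intro E; apply n0; apply (rank_inj n v); auto). lia. }
  apply before_le. apply (rank_before_iff n v j l); auto.
Qed.



Lemma top_vsorted n v j m : (j < n)%nat -> (rank n v j < m)%nat -> (m <= n)%nat ->
  vsorted n v m <= v j.
Proof.
  intros Hj Hr Hm. destruct (vsorted_at n v m) as [a [Ha [Hra E]]]. lia.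
  rewrite E. apply (rank_le_val n v); auto. lia.
Qed.

Lemma bot_vsorted n v j m : (j < n)%nat -> (m <= rank n v j)%nat ->
  v j <= vsorted n v (S m).
Proof.
  intros Hj Hr. pose proof (rank_lt n v j Hj).
  destruct (vsorted_at n v (S m)) as [a [Ha [Hra E]]]. lia.
  rewrite E. apply (rank_le_val n v); auto. simpl in Hra. lia.
Qed.

Lemma vsorted_anti n v m1 m2 : (1 <= m1)%nat -> (m1 <= m2 <= n)%nat -> vsorted n v m2 <= vsorted n v m1.
Proof.
  intros H1 H2.
  destruct (vsorted_at n v m1) as [a1 [Ha1 [Hr1 E1]]]. lia.
  destruct (vsorted_at n v m2) as [a2 [Ha2 [Hr2 E2]]]. lia.
  rewrite E1, E2. apply (rank_le_val n v); auto. lia.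
Qed.

Definition valid n B v m := prefB n B v m <= vsorted n v m.

Lemma kaux_le n B v m : (kaux n B v m <= m)%nat.
Proof. induction m; simpl; auto. destruct (Rle_dec _ _); lia. Qed.
Lemma kaux_valid n B v m : kaux n B v m = 0%nat \/ valid n B v (kaux n B v m).
Proof. induction m; simpl; auto. destruct (Rle_dec _ _); auto. Qed.
Lemma kaux_max n B v m m' : (kaux n B v m < m' <= m)%nat -> ~ valid n B v m'.
Proof.
  induction m; intros H. lia. simpl in H. destruct (Rle_dec _ _) as [Hv|Hv]. lia.
  destruct (Nat.eq_dec m' (S m)). subst. exact Hv. apply IHm. lia.
Qed.

Lemma valid_down n B v m1 m2 : (forall j, (j < n)%nat -> 0 <= B j) ->
  (1 <= m1)%nat -> (m1 <= m2 <= n)%nat -> valid n B v m2 -> valid n B v m1.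
Proof.
  intros HB H1 H2 Hv. unfold valid in *.
  pose proof (prefB_mono n B v m1 m2 HB ltac:(lia)).
  pose proof (vsorted_anti n v m1 m2 H1 H2). lra.
Qed.

Lemma kstar_le n B v : (kstar n B v <= n)%nat.
Proof. apply kaux_le. Qed.
Lemma kstar_valid n B v m : (forall j, (j < n)%nat -> 0 <= B j) ->
  (1 <= m <= kstar n B v)%nat -> valid n B v m.
Proof.
  intros HB Hm. pose proof (kstar_le n B v).
  destruct (kaux_valid n B v n) as [H0|H0]. unfold kstar in Hm; lia.
  apply (valid_down n B v m (kstar n B v)); auto; lia.
Qed.
Lemma kstar_max n B v m : (kstar n B v < m <= n)%nat -> ~ valid n B v m.
Proof. apply kaux_max. Qed.
Lemma kstar_ge n B v m : (1 <= m <= n)%nat -> valid n B v m -> (m <= kstar n B v)%nat.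
Proof.
  intros Hm Hv. destruct (Nat.le_gt_cases m (kstar n B v)); auto.
  exfalso. apply (kstar_max n B v m); auto. lia.
Qed.
Lemma kstar_unique n B v k : (forall j, (j < n)%nat -> 0 <= B j) -> (k <= n)%nat ->
  (k = 0%nat \/ valid n B v k) -> ((k < n)%nat -> ~ valid n B v (S k)) -> kstar n B v = k.
Proof.
  intros HB Hk Hv Hn. pose proof (kstar_le n B v).
  assert (k <= kstar n B v)%nat.
  { destruct Hv as [Hv|Hv]. lia. destruct (Nat.eq_dec k 0). lia. apply kstar_ge; auto. lia. }
  destruct (Nat.eq_dec k (kstar n B v)); auto.
  exfalso. apply Hn. lia. apply (valid_down n B v (S k) (kstar n B v)); auto. lia. lia.
  apply kstar_valid; auto. lia.
Qed.

Open Scope bool_scope.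

Definition KK n B v := kstar n B v.
Definition TT n B v := prefB n B v (KK n B v).
Definition WW n B v := vsorted n v (S (KK n B v)).

Lemma sum_div n B v k w : sumR n (fun j => if Nat.ltb (rank n v j) k then B j / w else 0) = prefB n B v k / w.
Proof.
  unfold prefB, Rdiv. rewrite Rmult_comm, <- sumR_scal. apply sumR_ext. intros j _.
  destruct (Nat.ltb _ _); lra.
Qed.

Lemma alloc_eq n B v i : alloc n B v i =
  if Rlt_dec (WW n B v) (TT n B v) then
    (if Nat.ltb (rank n v i) (KK n B v) then B i / TT n B v else 0)
  else
    (if Nat.ltb (rank n v i) (KK n B v) then B i / WW n B v
     else if Nat.eqb (rank n v i) (KK n B v) then 1 - TT n B v / WW n B v else 0).
Proof. unfold alloc. rewrite sum_div. reflexivity. Qed.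

Lemma prefB_ge n B v m j : (forall j, (j < n)%nat -> 0 <= B j) -> (j < n)%nat ->
  (rank n v j < m)%nat -> B j <= prefB n B v m.
Proof.
  intros HB Hj Hr. unfold prefB.
  replace (B j) with (sumR n (fun l => if Nat.eqb l j then B j else 0)).
  - apply sumR_le. intros l Hl. specialize (HB l Hl).
    destruct (Nat.eqb_spec l j).
    + subst. destruct (Nat.ltb_spec (rank n v j) m); lia || lra.
    + destruct (Nat.ltb (rank n v l) m); lra.
  - rewrite (sumR_single n _ j Hj). rewrite Nat.eqb_refl. auto.
    intros l _ Hne. destruct (Nat.eqb_spec l j); [congruence|auto].
Qed.

Section S.
Context (n : nat) (B v : nat -> R) (HB : forall j, (j < n)%nat -> 0 < B j).
Let HB0 : forall j, (j < n)%nat -> 0 <= B j.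
Proof. intros j Hj; specialize (HB j Hj); lra. Qed.

Lemma KK_le : (KK n B v <= n)%nat.
Proof using HB. apply kstar_le. Qed.

Lemma TT_nonneg : 0 <= TT n B v.
Proof using HB. apply prefB_nonneg; auto. Qed.

Lemma TT_valid : (1 <= KK n B v)%nat -> TT n B v <= vsorted n v (KK n B v).
Proof using HB. intros H. apply (kstar_valid n B v); [exact HB0|]. pose proof KK_le. unfold KK in *. lia. Qed.

Lemma TT_pos : (1 <= KK n B v)%nat -> 0 < TT n B v.
Proof using HB.
  intros H. destruct (rank_surj n v 0) as [a [Ha Hr]]. pose proof KK_le; lia.
  pose proof (prefB_ge n B v (KK n B v) a HB0 Ha ltac:(lia)). specialize (HB a Ha). unfold TT. lra.
Qed.

Lemma WW_marg : (KK n B v < n)%nat -> exists m, (m < n)%nat /\ rank n v m = KK n B v /\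
  WW n B v = v m /\ TT n B v + B m > WW n B v /\ prefB n B v (S (KK n B v)) = TT n B v + B m.
Proof using HB.
  intros H. destruct (rank_surj n v (KK n B v) H) as [m [Hm Hr]].
  exists m. assert (E : WW n B v = v m) by (unfold WW; rewrite <- Hr; apply vsorted_rank; auto).
  pose proof (prefB_S n B v (KK n B v) m Hm Hr) as E2.
  repeat split; auto.
  pose proof (kstar_max n B v (S (KK n B v)) ltac:(unfold KK in *; lia)) as Hn.
  unfold valid in Hn. unfold TT, WW in *. unfold KK in *. lra.
Qed.

Lemma WW_n : KK n B v = n -> WW n B v = 0.
Proof using HB. intros H. unfold WW. rewrite H. apply vsorted_out. lia. Qed.

Lemma top_TT j : (j < n)%nat -> (rank n v j < KK n B v)%nat -> TT n B v <= v j.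
Proof using HB.
  intros Hj Hr. pose proof (TT_valid ltac:(lia)).
  pose proof (top_vsorted n v j (KK n B v) Hj Hr KK_le). lra.
Qed.

Lemma top_WW j : (j < n)%nat -> (rank n v j < KK n B v)%nat -> WW n B v <= v j.
Proof using HB.
  intros Hj Hr. destruct (Nat.eq_dec (KK n B v) n) as [E|E].
  - rewrite WW_n by auto. pose proof (top_TT j Hj Hr). pose proof TT_nonneg. lra.
  - destruct (WW_marg ltac:(pose proof KK_le; lia)) as [m [Hm [Hrm [Ew _]]]].
    rewrite Ew. apply (rank_le_val n v); auto. lia.
Qed.

Lemma bot_WW j : (j < n)%nat -> (KK n B v <= rank n v j)%nat -> v j <= WW n B v.
Proof using HB. intros Hj Hr. unfold WW. apply bot_vsorted; auto. Qed.

End S.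

Lemma countN_remove n p j : (j < n)%nat -> p j = true ->
  (countN n (fun l => p l && negb (Nat.eqb l j)) + 1 = countN n p)%nat.
Proof.
  induction n; intros Hj Hp. lia.
  simpl. destruct (Nat.eq_dec j n).
  - subst. rewrite Hp, Nat.eqb_refl. simpl.
    rewrite (countN_ext n _ p). lia. intros l Hl. destruct (Nat.eqb_spec l n); try lia.
    rewrite andb_true_r. auto.
  - rewrite <- (IHn ltac:(lia) Hp). destruct (Nat.eqb_spec n j); try lia. simpl.
    destruct (p n); simpl; lia.
Qed.

Lemma top_same n v v' m : (m <= n)%nat ->
  (forall a o, (a < n)%nat -> (o < n)%nat -> (rank n v a < m)%nat -> (m <= rank n v o)%nat ->
     before v' a o = true) ->
  forall j, (j < n)%nat -> ((rank n v' j < m)%nat <-> (rank n v j < m)%nat).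
Proof.
  intros Hm Hab j Hj. split; intros H.
  - destruct (Nat.lt_ge_cases (rank n v j) m) as [H1|H1]; auto.
    exfalso. assert (m <= rank n v' j)%nat; [|lia].
    rewrite <- (count_top n v m Hm). unfold rank at 2. apply countN_mono.
    intros l Hl Hlt. apply Hab; auto. apply Nat.ltb_lt; auto.
  - pose proof (countN_remove n (fun l => Nat.ltb (rank n v l) m) j Hj ltac:(apply Nat.ltb_lt; auto)) as E.
    rewrite count_top in E by auto.
    assert (rank n v' j <= countN n (fun l => Nat.ltb (rank n v l) m && negb (Nat.eqb l j)))%nat; [|lia].
    unfold rank at 1. apply countN_mono. intros l Hl Hb.
    destruct (Nat.eqb_spec l j). subst. rewrite before_irrefl in Hb; discriminate.
    rewrite andb_true_r. apply Nat.ltb_lt.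
    destruct (Nat.lt_ge_cases (rank n v l) m) as [H1|H1]; auto.
    pose proof (Hab j l Hj Hl H H1). rewrite (before_asym v' l j) in Hb; auto. discriminate.
Qed.

Definition agree n (v v' : nat -> R) i := forall j, (j < n)%nat -> j <> i -> v' j = v j.

Lemma before_agree n v v' i a o : agree n v v' i -> (a < n)%nat -> (o < n)%nat -> a <> i -> o <> i ->
  before v' a o = before v a o.
Proof. intros H Ha Ho Hai Hoi. unfold before. rewrite (H a), (H o); auto. Qed.

Lemma prefB_same n B v v' m : (forall j, (j < n)%nat -> ((rank n v' j < m)%nat <-> (rank n v j < m)%nat)) ->
  prefB n B v' m = prefB n B v m.
Proof.
  intros H. unfold prefB. apply sumR_ext. intros j Hj. specialize (H j Hj).
  destruct (Nat.ltb_spec (rank n v' j) m), (Nat.ltb_spec (rank n v j) m); auto; exfalso; [apply H in H0|apply H in H1]; lia.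
Qed.

Lemma winner_stable n B v v' i : (forall j, (j < n)%nat -> 0 < B j) -> (i < n)%nat ->
  agree n v v' i ->
  (rank n v i < KK n B v)%nat ->
  (forall o, (o < n)%nat -> (KK n B v <= rank n v o)%nat -> before v' i o = true) ->
  TT n B v <= v' i ->
  KK n B v' = KK n B v /\ TT n B v' = TT n B v /\ WW n B v' = WW n B v /\ (rank n v' i < KK n B v')%nat.
Proof.
  intros HB Hi Hag Hwin H1 H2.
  assert (HB0 : forall j, (j < n)%nat -> 0 <= B j) by (intros j Hj; specialize (HB j Hj); lra).
  set (K := KK n B v). pose proof (KK_le n B v HB) as HK. fold K in HK.
  assert (Hs : forall m, (m = K \/ m = S K)%nat -> (m <= n)%nat ->
            forall j, (j < n)%nat -> ((rank n v' j < m)%nat <-> (rank n v j < m)%nat)).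
  { intros m Hm Hmn. apply top_same; auto. intros a o Ha Ho Hra Hro.
    destruct (Nat.eq_dec a i).
    - subst. apply H1; auto. lia.
    - destruct (Nat.eq_dec o i). subst; lia.
      rewrite (before_agree n v v' i a o); auto. apply (rank_before_iff n v a o); auto. lia. }
  assert (HsK := Hs K (or_introl eq_refl) HK).
  assert (EP : prefB n B v' K = prefB n B v K) by (apply prefB_same; auto).
  assert (Hvalid : K = 0%nat \/ valid n B v' K).
  { destruct (Nat.eq_dec K 0); [left; auto|right].
    unfold valid. destruct (vsorted_at n v' K) as [a [Ha [Hra E]]]. lia.
    rewrite E, EP. fold (TT n B v).
    assert (Hra' : (rank n v a < K)%nat) by (apply HsK; auto; lia).
    destruct (Nat.eq_dec a i). subst; auto.
    rewrite (Hag a Ha n1). apply top_TT; auto. }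
  assert (Hinv : (K < n)%nat -> ~ valid n B v' (S K) /\ vsorted n v' (S K) = WW n B v).
  { intros HKn. assert (HsK1 := Hs (S K) (or_intror eq_refl) ltac:(lia)).
    destruct (WW_marg n B v HB HKn) as [m [Hm [Hrm [Ew [Hgt Ep]]]]].
    assert (EP1 : prefB n B v' (S K) = prefB n B v (S K)) by (apply prefB_same; auto).
    destruct (vsorted_at n v' (S K)) as [a [Ha [Hra E]]]. lia. simpl in Hra.
    assert (Hra1 : (rank n v a < S K)%nat) by (apply HsK1; auto; lia).
    assert (Hra2 : ~ (rank n v a < K)%nat) by (intro X; apply HsK in X; auto; lia).
    assert (a = m) by (apply (rank_inj n v); auto; fold K in Hrm; lia). subst a.
    assert (m <> i) by (intro X; subst; fold K in Hrm; lia).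
    rewrite E, (Hag m Hm H). split; [|auto].
    unfold valid. rewrite E, (Hag m Hm H), EP1. unfold K. rewrite Ep, <- Ew. lra. }
  assert (EK : KK n B v' = K).
  { apply kstar_unique; auto. intros X. apply (Hinv X). }
  split; auto. split. unfold TT. rewrite EK. auto.
  split.
  - unfold WW at 1. rewrite EK. destruct (Nat.eq_dec K n).
    + rewrite e. rewrite vsorted_out by lia. rewrite WW_n; auto.
    + apply Hinv. lia.
  - rewrite EK. apply HsK; auto.
Qed.

Definition monoR (f : R -> R) := forall x y, 0 <= x -> x <= y -> f x <= f y.

Lemma int_pr f a b : monoR f -> 0 <= a -> a <= b -> Riemann_integrable f a b.
Proof. intros Hm Ha Hab. apply mono_integrable; auto. intros; apply Hm; lra. Qed.

Lemma int_ge_const f a b c (pr : Riemann_integrable f a b) : a <= b ->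
  (forall x, a < x < b -> c <= f x) -> c * (b - a) <= RiemannInt pr.
Proof.
  intros Hab H. rewrite <- (RiemannInt_P15 (RiemannInt_P14 a b c)).
  apply RiemannInt_P19; auto.
Qed.

Lemma int_le_const f a b c (pr : Riemann_integrable f a b) : a <= b ->
  (forall x, a < x < b -> f x <= c) -> RiemannInt pr <= c * (b - a).
Proof.
  intros Hab H. rewrite <- (RiemannInt_P15 (RiemannInt_P14 a b c)).
  apply RiemannInt_P19; auto.
Qed.

Lemma myerson_ineq f vi r : monoR f -> 0 < vi -> 0 < r ->
  vi * f r - (r * f r - integral f 0 r) <= vi * f vi - (vi * f vi - integral f 0 vi).
Proof.
  intros Hm Hv Hr.
  rewrite (integral_eq f 0 r (int_pr f 0 r Hm ltac:(lra) ltac:(lra))).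
  rewrite (integral_eq f 0 vi (int_pr f 0 vi Hm ltac:(lra) ltac:(lra))).
  destruct (Rle_dec r vi).
  - pose proof (RiemannInt_P26 (int_pr f 0 r Hm ltac:(lra) ltac:(lra)) (int_pr f r vi Hm ltac:(lra) ltac:(lra))
                  (int_pr f 0 vi Hm ltac:(lra) ltac:(lra))) as E.
    pose proof (int_ge_const f r vi (f r) (int_pr f r vi Hm ltac:(lra) ltac:(lra)) r0
                  (fun x Hx => Hm r x ltac:(lra) ltac:(lra))).
    lra.
  - pose proof (RiemannInt_P26 (int_pr f 0 vi Hm ltac:(lra) ltac:(lra)) (int_pr f vi r Hm ltac:(lra) ltac:(lra))
                  (int_pr f 0 r Hm ltac:(lra) ltac:(lra))) as E.
    pose proof (int_le_const f vi r (f r) (int_pr f vi r Hm ltac:(lra) ltac:(lra)) ltac:(lra)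
                  (fun x Hx => Hm x r ltac:(lra) ltac:(lra))).
    lra.
Qed.

Lemma integral_nonneg f u : monoR f -> (forall x, 0 <= x -> 0 <= f x) -> 0 <= u -> 0 <= integral f 0 u.
Proof.
  intros Hm Hp Hu. rewrite (integral_eq f 0 u (int_pr f 0 u Hm ltac:(lra) Hu)).
  pose proof (int_ge_const f 0 u 0 (int_pr f 0 u Hm ltac:(lra) Hu) Hu (fun x Hx => Hp x ltac:(lra))). lra.
Qed.

Lemma pay_flat f u p : monoR f -> (forall x, 0 <= x -> 0 <= f x) -> 0 <= p -> p <= u ->
  (forall x, p < x < u -> f x = f u) -> u * f u - integral f 0 u <= p * f u.
Proof.
  intros Hm Hp Hp0 Hpu Hc.
  rewrite (integral_eq f 0 u (int_pr f 0 u Hm ltac:(lra) ltac:(lra))).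
  pose proof (RiemannInt_P26 (int_pr f 0 p Hm ltac:(lra) ltac:(lra)) (int_pr f p u Hm ltac:(lra) ltac:(lra))
                  (int_pr f 0 u Hm ltac:(lra) ltac:(lra))) as E.
  pose proof (int_ge_const f p u (f u) (int_pr f p u Hm ltac:(lra) ltac:(lra)) Hpu
                  (fun x Hx => Req_le _ _ (eq_sym (Hc x Hx)))).
  pose proof (int_ge_const f 0 p 0 (int_pr f 0 p Hm ltac:(lra) ltac:(lra)) Hp0
                  (fun x Hx => Hp x ltac:(lra))).
  lra.
Qed.

Lemma upd_i b i t : upd b i t i = t.
Proof. unfold upd. rewrite Nat.eqb_refl. auto. Qed.
Lemma upd_j b i t j : j <> i -> upd b i t j = b j.
Proof. intros H. unfold upd. destruct (Nat.eqb_spec j i); congruence. Qed.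
Lemma agree_upd n b i t1 t2 : agree n (upd b i t1) (upd b i t2) i.
Proof. intros j _ Hj. rewrite !upd_j; auto. Qed.

Lemma before_down b i t1 t2 j : t1 <= t2 -> j <> i ->
  before (upd b i t2) j i = true -> before (upd b i t1) j i = true.
Proof. intros Ht Hj H. unfold before in *. rewrite !upd_i, !upd_j in * by auto.
  destruct (Rlt_dec t2 (b j)); destruct (Rlt_dec t1 (b j)); try lra; auto.
  destruct (Req_EM_T (b j) t2); try discriminate.
  destruct (Req_EM_T (b j) t1); try lra; auto. Qed.

Lemma before_up b i t1 t2 j : t1 <= t2 -> j <> i ->
  before (upd b i t1) i j = true -> before (upd b i t2) i j = true.
Proof. intros Ht Hj H. unfold before in *. rewrite !upd_i, !upd_j in * by auto.
  destruct (Rlt_dec (b j) t1); destruct (Rlt_dec (b j) t2); try lra; auto.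
  destruct (Req_EM_T t1 (b j)); try discriminate.
  destruct (Req_EM_T t2 (b j)); try lra; auto. Qed.

Lemma alg_frac_le a b c : 0 < a -> a <= b -> 0 <= c -> c / b <= c / a.
Proof. intros. unfold Rdiv. apply Rmult_le_compat_l; auto. apply Rinv_le_contravar; auto. Qed.

Section F.
Context (n : nat) (B b : nat -> R) (i : nat).
Context (HB : forall j, (j < n)%nat -> 0 < B j) (Hi : (i < n)%nat).

Let f t := alloc n B (upd b i t) i.
Let HB0 : forall j, (j < n)%nat -> 0 <= B j.
Proof. intros j Hj; specialize (HB j Hj); lra. Qed.

Lemma f_nonneg t : 0 <= alloc n B (upd b i t) i.
Proof using HB Hi.
  set (v := upd b i t). rewrite alloc_eq.
  pose proof (TT_nonneg n B v HB).
  destruct (Rlt_dec (WW n B v) (TT n B v)).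
  - destruct (Nat.ltb_spec (rank n v i) (KK n B v)); [|lra].
    pose proof (TT_pos n B v HB ltac:(lia)). pose proof (HB i Hi).
    apply Rlt_le, Rdiv_lt_0_compat; lra.
  - destruct (Nat.ltb_spec (rank n v i) (KK n B v)).
    + pose proof (TT_pos n B v HB ltac:(lia)). pose proof (HB i Hi).
      apply Rlt_le, Rdiv_lt_0_compat; lra.
    + destruct (Nat.eqb (rank n v i) (KK n B v)); [|lra].
      destruct (Req_dec (WW n B v) 0) as [E|E].
      * rewrite E. unfold Rdiv. rewrite Rinv_0. lra.
      * assert (TT n B v / WW n B v <= 1).
        { apply (Rmult_le_reg_r (WW n B v)). lra. unfold Rdiv. rewrite Rmult_assoc, Rinv_l; lra. }
        lra.
Qed.

Lemma prefB_bound t1 t2 m : t1 <= t2 -> (m <= n)%nat ->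
  (forall j, (j < n)%nat -> j <> i -> (rank n (upd b i t2) j < m)%nat -> before (upd b i t1) j i = true) ->
  prefB n B (upd b i t2) m <= prefB n B (upd b i t1) (rank n (upd b i t1) i) + B i.
Proof using HB Hi.
  intros Ht Hm H.
  apply Rle_trans with (sumR n (fun j => (if Nat.ltb (rank n (upd b i t1) j) (rank n (upd b i t1) i) then B j else 0)
                          + (if Nat.eqb j i then B i else 0))).
  2:{ rewrite sumR_plus. rewrite (sumR_single n (fun j => if Nat.eqb j i then B i else 0) i Hi).
      rewrite Nat.eqb_refl. unfold prefB. lra.
      intros j _ Hj; destruct (Nat.eqb_spec j i); congruence. }
  unfold prefB. apply sumR_le. intros j Hj.
  specialize (HB0 j Hj).
  destruct (Nat.eqb_spec j i).
  - subst. destruct (Nat.ltb (rank n (upd b i t2) i) m), (Nat.ltb _ _); lra.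
  - destruct (Nat.ltb_spec (rank n (upd b i t2) j) m).
    + specialize (H j Hj n0 H0). apply (rank_before_iff n _ j i Hj Hi) in H.
      apply Nat.ltb_lt in H. rewrite H. lra.
    + destruct (Nat.ltb _ _); lra.
Qed.


Lemma marg_mono t1 t2 : 0 <= t1 -> t1 < t2 ->
  rank n (upd b i t1) i = KK n B (upd b i t1) ->
  ~ (WW n B (upd b i t1) < TT n B (upd b i t1)) ->
  alloc n B (upd b i t1) i <= alloc n B (upd b i t2) i.
Proof using HB Hi.
  intros Ht1 Ht12 Hr1 HII.
  set (v1 := upd b i t1) in *. set (v2 := upd b i t2).
  set (K1 := KK n B v1) in *. set (T1 := TT n B v1) in *.
  assert (EW1 : WW n B v1 = t1).
  { unfold WW. fold K1. rewrite <- Hr1. rewrite vsorted_rank by auto. apply upd_i. }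
  assert (Ef1 : alloc n B v1 i = 1 - T1 / t1).
  { rewrite alloc_eq. fold K1 T1. destruct (Rlt_dec (WW n B v1) T1); [contradiction|].
    rewrite Hr1, Nat.ltb_irrefl, Nat.eqb_refl, EW1. auto. }
  rewrite Ef1. rewrite EW1 in HII.
  assert (HT1 : 0 <= T1) by apply (TT_nonneg n B v1 HB).
  assert (HK1n : (K1 < n)%nat) by (rewrite <- Hr1; apply rank_lt; auto).
  destruct (WW_marg n B v1 HB HK1n) as [m [Hm [Hrm [Ewm [Hgt _]]]]].
  assert (m = i) by (apply (rank_inj n v1); auto; fold K1; lia). subst m.
  fold T1 in Hgt. rewrite EW1 in Hgt.
  pose proof (HB i Hi) as HBi.
  assert (Hx1a : 1 - T1 / t1 <= B i / (T1 + B i)).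
  { destruct (Req_dec t1 0) as [E|E].
    - assert (T1 = 0) by lra. rewrite E, H. unfold Rdiv. rewrite Rinv_0, Rplus_0_l, Rinv_r; lra.
    - assert (E1 : B i / (T1 + B i) = 1 - T1 / (T1 + B i)) by (field; lra).
      rewrite E1. pose proof (alg_frac_le t1 (T1 + B i) T1 ltac:(lra) ltac:(lra) HT1). lra. }
  assert (Hx1b : 0 < t1 -> 1 - T1 / t1 <= B i / t1).
  { intros Hp. assert (E1 : 1 - T1 / t1 = (t1 - T1) / t1) by (field; lra). rewrite E1.
    unfold Rdiv. apply Rmult_le_compat_r. apply Rlt_le, Rinv_0_lt_compat; auto. lra. }
  assert (Fsub : forall j, (j < n)%nat -> j <> i -> before v2 j i = true -> (rank n v1 j < K1)%nat).
  { intros j Hj Hji H. rewrite <- Hr1. apply (rank_before_iff n v1 j i Hj Hi).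
    apply (before_down b i t1 t2 j); auto. lra. }
  set (r2 := rank n v2 i). set (K2 := KK n B v2). set (T2 := TT n B v2). set (W2 := WW n B v2).
  assert (Hpre : prefB n B v2 r2 <= T1).
  { unfold prefB, T1, TT. fold K1. apply sumR_le. intros j Hj.
    destruct (Nat.ltb_spec (rank n v2 j) r2).
    - assert (Hb : before v2 j i = true) by (apply (rank_before_iff n v2 j i Hj Hi); auto).
      assert (j <> i) by (intro X; rewrite X in H; unfold r2 in H; lia).
      specialize (Fsub j Hj H0 Hb). apply Nat.ltb_lt in Fsub. rewrite Fsub. lra.
    - destruct (Nat.ltb _ _); specialize (HB0 j Hj); lra. }
  assert (Hr2n : (r2 < n)%nat) by (apply rank_lt; auto).
  assert (Hr2K : (r2 <= K2)%nat).
  { destruct (Nat.eq_dec r2 0). lia.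
    apply kstar_ge. lia. unfold valid.
    destruct (vsorted_at n v2 r2) as [a [Ha [Hra E]]]. lia.
    assert (Hb : before v2 a i = true) by (apply (rank_before_iff n v2 a i Ha Hi); fold r2; lia).
    assert (a <> i) by (intro X; rewrite X in Hb; rewrite before_irrefl in Hb; discriminate).
    specialize (Fsub a Ha H Hb).
    pose proof (top_TT n B v1 HB a Ha Fsub). fold T1 in H0.
    rewrite E. replace (v2 a) with (b a) by (unfold v2; rewrite upd_j; auto).
    replace (v1 a) with (b a) in H0 by (unfold v1; rewrite upd_j; auto). lra. }
  destruct (Nat.eq_dec r2 K2) as [Eq|Neq].
  -
    assert (EW2 : W2 = t2) by (unfold W2, WW; fold K2; rewrite <- Eq; unfold r2; rewrite vsorted_rank by auto; apply upd_i).
    assert (ET2 : T2 <= T1) by (unfold T2, TT; fold K2; rewrite <- Eq; auto).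
    assert (HT2 : 0 <= T2) by apply (TT_nonneg n B v2 HB).
    rewrite alloc_eq. fold K2 T2 W2. destruct (Rlt_dec W2 T2); [lra|].
    assert (Hrk : rank n v2 i = K2) by auto. rewrite Hrk, Nat.ltb_irrefl, Nat.eqb_refl, EW2.
    destruct (Req_dec t1 0) as [E|E].
    + assert (T1 = 0) by lra. assert (T2 = 0) by lra. rewrite H, H0. unfold Rdiv. rewrite !Rmult_0_l. lra.
    + pose proof (alg_frac_le t1 t2 T1 ltac:(lra) ltac:(lra) HT1).
      assert (T2 / t2 <= T1 / t2) by (unfold Rdiv; apply Rmult_le_compat_r; [apply Rlt_le, Rinv_0_lt_compat; lra|lra]).
      lra.
  - assert (Hw : (rank n v2 i < K2)%nat) by (fold r2; lia).
    assert (HT2 : 0 < T2) by (apply (TT_pos n B v2 HB); fold K2; lia).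
    rewrite alloc_eq. fold K2 T2 W2.
    apply Nat.ltb_lt in Hw. rewrite Hw. apply Nat.ltb_lt in Hw.
    destruct (Rlt_dec W2 T2) as [HI|HII2].
    + destruct (Rle_dec T2 t1).
      * pose proof (alg_frac_le T2 t1 (B i) HT2 r ltac:(lra)). pose proof (Hx1b ltac:(lra)). lra.
      * assert (Hb : T2 <= T1 + B i).
        { unfold T2, TT. fold K2. unfold T1, TT. fold K1. rewrite <- Hr1.
          apply prefB_bound; [lra| apply (KK_le n B v2 HB)|].
          intros j Hj Hji Hrj. apply lt_before. change (v1 i < v1 j).
          assert (E1 : v1 i = t1) by (unfold v1; apply upd_i).
          assert (E2 : v1 j = b j) by (unfold v1; apply upd_j; auto).
          assert (E3 : v2 j = b j) by (unfold v2; apply upd_j; auto).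
          pose proof (top_TT n B v2 HB j Hj Hrj) as H. fold T2 in H. lra. }
        pose proof (alg_frac_le T2 (T1 + B i) (B i) HT2 Hb ltac:(lra)). lra.
    + assert (HK2n : (K2 < n)%nat).
      { destruct (Nat.eq_dec K2 n); [|pose proof (KK_le n B v2 HB); fold K2 in H; lia].
        exfalso. pose proof (WW_n n B v2 HB e). fold W2 in H. lra. }
      destruct (WW_marg n B v2 HB HK2n) as [m2 [Hm2 [Hrm2 [Ewm2 [Hgt2 Ep2]]]]].
      fold T2 W2 K2 in Hgt2, Ep2, Ewm2.
      assert (HW2 : 0 < W2) by lra.
      destruct (Rle_dec W2 t1).
      * pose proof (alg_frac_le W2 t1 (B i) HW2 r ltac:(lra)). pose proof (Hx1b ltac:(lra)). lra.
      * assert (Hb : prefB n B v2 (S K2) <= T1 + B i).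
        { unfold T1, TT. fold K1. rewrite <- Hr1.
          apply prefB_bound; [lra| lia|].
          intros j Hj Hji Hrj. apply lt_before. change (v1 i < v1 j).
          assert (E1 : v1 i = t1) by (unfold v1; apply upd_i).
          assert (E2 : v1 j = b j) by (unfold v1; apply upd_j; auto).
          assert (E3 : v2 j = b j) by (unfold v2; apply upd_j; auto).
          pose proof (top_vsorted n v2 j (S K2) Hj Hrj ltac:(lia)) as H.
          assert (E4 : vsorted n v2 (S K2) = W2) by reflexivity. lra. }
        pose proof (alg_frac_le W2 (T1 + B i) (B i) HW2 ltac:(lra) ltac:(lra)). lra.
Qed.

Lemma alloc_mono t1 t2 : 0 <= t1 -> t1 <= t2 ->
  alloc n B (upd b i t1) i <= alloc n B (upd b i t2) i.
Proof using HB Hi.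
  intros Ht1 Ht12. destruct (Req_dec t1 t2) as [E|E]. subst; lra.
  set (v1 := upd b i t1). set (v2 := upd b i t2).
  destruct (Nat.lt_ge_cases (rank n v1 i) (KK n B v1)) as [Hw|Hnw].
  - destruct (winner_stable n B v1 v2 i HB Hi (agree_upd n b i t1 t2) Hw) as [EK [ET [EW Hr]]].
    + intros o Ho Hro. assert (o <> i) by (intro X; rewrite X in Hro; lia).
      apply (before_up b i t1 t2 o); [lra|auto|].
      apply (rank_before_iff n v1 i o Hi Ho). lia.
    + pose proof (top_TT n B v1 HB i Hi Hw). unfold v1, v2 in *. rewrite upd_i in *. lra.
    + rewrite !alloc_eq. rewrite EK, ET, EW.
      apply Nat.ltb_lt in Hw. apply Nat.ltb_lt in Hr. rewrite EK in Hr. rewrite Hw, Hr. lra.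
  - destruct (Nat.eq_dec (rank n v1 i) (KK n B v1)) as [Eq|Ne].
    + destruct (Rlt_dec (WW n B v1) (TT n B v1)) as [HI|HII].
      * rewrite alloc_eq at 1. fold v1. destruct (Rlt_dec (WW n B v1) (TT n B v1)); [|contradiction].
        rewrite Eq, Nat.ltb_irrefl. apply f_nonneg.
      * apply marg_mono; auto. lra.
    + rewrite alloc_eq at 1. fold v1.
      assert (E1 : Nat.ltb (rank n v1 i) (KK n B v1) = false) by (apply Nat.ltb_ge; lia).
      assert (E2 : Nat.eqb (rank n v1 i) (KK n B v1) = false) by (apply Nat.eqb_neq; auto).
      rewrite E1, E2. destruct (Rlt_dec _ _); apply f_nonneg.
Qed.


Lemma winner_alloc_eq v v' : KK n B v' = KK n B v -> TT n B v' = TT n B v -> WW n B v' = WW n B v ->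
  (rank n v' i < KK n B v')%nat -> (rank n v i < KK n B v)%nat -> alloc n B v' i = alloc n B v i.
Proof.
  intros EK ET EW H1 H2. rewrite !alloc_eq. rewrite EK, ET, EW in *.
  apply Nat.ltb_lt in H1. apply Nat.ltb_lt in H2. rewrite H1, H2. auto.
Qed.

Lemma pay_bound u : 0 < u ->
  u * alloc n B (upd b i u) i - integral (fun t => alloc n B (upd b i t) i) 0 u <= B i.
Proof using HB Hi.
  intros Hu. set (F := fun t => alloc n B (upd b i t) i).
  assert (Hm : monoR F) by (intros x y Hx Hxy; apply alloc_mono; auto).
  assert (Hp : forall x, 0 <= x -> 0 <= F x) by (intros; apply f_nonneg).
  change (alloc n B (upd b i u) i) with (F u).
  pose proof (integral_nonneg F u Hm Hp ltac:(lra)) as HI.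
  set (v := upd b i u).
  pose proof (HB i Hi) as HBi.
  assert (Evi : v i = u) by apply upd_i.
  destruct (Nat.lt_ge_cases (rank n v i) (KK n B v)) as [Hw|Hnw].
  - set (p := if Rlt_dec (WW n B v) (TT n B v) then TT n B v else WW n B v).
    assert (HT : 0 < TT n B v) by (apply (TT_pos n B v HB); lia).
    assert (HTu : TT n B v <= u) by (rewrite <- Evi; apply top_TT; auto).
    assert (HWu : WW n B v <= u) by (rewrite <- Evi; apply top_WW; auto).
    assert (HTp : TT n B v <= p) by (unfold p; destruct (Rlt_dec _ _); lra).
    assert (HWp : WW n B v <= p) by (unfold p; destruct (Rlt_dec _ _); lra).
    assert (Hpu : p <= u) by (unfold p; destruct (Rlt_dec _ _); lra).
    assert (EF : F u = B i / p).
    { unfold F. fold v. rewrite alloc_eq. apply Nat.ltb_lt in Hw. rewrite Hw. unfold p.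
      destruct (Rlt_dec _ _); auto. }
    assert (Hflat : forall x, p < x < u -> F x = F u).
    { intros x Hx. unfold F. fold v.
      destruct (winner_stable n B v (upd b i x) i HB Hi (agree_upd n b i u x) Hw) as [EK [ET [EW Hr]]].
      + intros o Ho Hro. assert (o <> i) by (intro X; rewrite X in Hro; lia).
        apply lt_before. rewrite upd_i, upd_j by auto.
        pose proof (bot_WW n B v HB o Ho Hro). replace (v o) with (b o) in H0 by (unfold v; rewrite upd_j; auto). lra.
      + rewrite upd_i. lra.
      + apply winner_alloc_eq; auto. }
    pose proof (pay_flat F u p Hm Hp ltac:(lra) Hpu Hflat).
    rewrite EF in *. replace (p * (B i / p)) with (B i) in H by (field; lra). lra.
  - destruct (Nat.eq_dec (rank n v i) (KK n B v)) as [Eq|Ne].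
    + destruct (Rlt_dec (WW n B v) (TT n B v)) as [HI1|HII].
      * assert (F u = 0).
        { unfold F. fold v. rewrite alloc_eq. destruct (Rlt_dec _ _); [|contradiction].
          rewrite Eq, Nat.ltb_irrefl. auto. }
        rewrite H. lra.
      * assert (EW : WW n B v = u).
        { unfold WW. rewrite <- Eq. rewrite vsorted_rank by auto. auto. }
        assert (HKn : (KK n B v < n)%nat) by (rewrite <- Eq; apply rank_lt; auto).
        destruct (WW_marg n B v HB HKn) as [m [Hm' [Hrm [Ewm [Hgt _]]]]].
        assert (m = i) by (apply (rank_inj n v); auto; lia). subst m.
        assert (F u = 1 - TT n B v / u).
        { unfold F. fold v. rewrite alloc_eq. destruct (Rlt_dec _ _); [contradiction|].
          rewrite Eq, Nat.ltb_irrefl, Nat.eqb_refl, EW. auto. }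
        rewrite H. replace (u * (1 - TT n B v / u)) with (u - TT n B v) by (field; lra). lra.
    + assert (F u = 0).
      { unfold F. fold v. rewrite alloc_eq.
        assert (E1 : Nat.ltb (rank n v i) (KK n B v) = false) by (apply Nat.ltb_ge; lia).
        assert (E2 : Nat.eqb (rank n v i) (KK n B v) = false) by (apply Nat.eqb_neq; auto).
        rewrite E1, E2. destruct (Rlt_dec _ _); auto. }
      rewrite H. lra.
Qed.

End F.

Lemma Rmin_term v z Bj p : 0 <= z -> 0 < p -> p <= v -> 0 < Bj ->
  Rmin (v * z) Bj <= p * z + (Bj - p * (Bj / v)).
Proof.
  intros Hz Hp Hpv HB. set (w := Bj / v).
  assert (EB : Bj = v * w) by (unfold w; field; lra).
  assert (Hw : 0 < w) by (unfold w; apply Rdiv_lt_0_compat; lra).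
  rewrite EB. unfold Rmin. destruct (Rle_dec (v * z) (v * w)).
  - assert (z <= w) by nra. nra.
  - assert (w <= z) by nra. nra.
Qed.

Lemma prefB_all n B v : prefB n B v n = sumR n B.
Proof.
  unfold prefB. apply sumR_ext. intros j Hj. pose proof (rank_lt n v j Hj).
  destruct (Nat.ltb_spec (rank n v j) n); auto; lia.
Qed.

Fixpoint gaux n (C v : nat -> R) (m : nat) : nat :=
  match m with
  | O => O
  | S m' => if Rle_dec (prefB n C v m) 1 then m else gaux n C v m'
  end.

Lemma gaux_le n C v m : (gaux n C v m <= m)%nat.
Proof. induction m; simpl; auto. destruct (Rle_dec _ _); lia. Qed.
Lemma gaux_ok n C v m : prefB n C v (gaux n C v m) <= 1.
Proof. induction m; simpl. rewrite prefB_0; lra. destruct (Rle_dec _ _); auto. Qed.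
Lemma gaux_max n C v m m' : (gaux n C v m < m' <= m)%nat -> prefB n C v m' > 1.
Proof.
  induction m; intros H. lia. simpl in H. destruct (Rle_dec _ _) as [Hv|Hv]. lia.
  destruct (Nat.eq_dec m' (S m)). subst. lra. apply IHm. lia.
Qed.

Section W.
Context (n : nat) (B v : nat -> R).
Context (HB : forall j, (j < n)%nat -> 0 < B j) (Hv : forall j, (j < n)%nat -> 0 < v j) (Hn : (0 < n)%nat).

Lemma LW_upper y : feasible n y -> LW n v B y <= TT n B v + WW n B v.
Proof using HB Hv Hn.
  intros [Hy Hs]. set (K := KK n B v).
  assert (HW : 0 <= WW n B v).
  { destruct (Nat.eq_dec K n). rewrite WW_n; auto. lra.
    destruct (WW_marg n B v HB) as [m [Hm [_ [E _]]]]. pose proof (KK_le n B v HB) as HKl; fold K in HKl; lia.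
    rewrite E. pose proof (Hv m Hm). lra. }
  unfold LW. apply Rle_trans with (sumR n (fun j => (if Nat.ltb (rank n v j) K then B j else 0) + WW n B v * y j)).
  - apply sumR_le. intros j Hj. specialize (Hy j Hj). pose proof (Hv j Hj). pose proof (HB j Hj).
    destruct (Nat.ltb_spec (rank n v j) K) as [Hr|Hr].
    + pose proof (Rmin_r (v j * y j) (B j)). nra.
    + pose proof (Rmin_l (v j * y j) (B j)). pose proof (bot_WW n B v HB j Hj Hr). nra.
  - rewrite sumR_plus, sumR_scal, Hs. unfold TT, prefB. fold K. lra.
Qed.

Lemma LW_alloc : (TT n B v + WW n B v) / 2 <= LW n v B (alloc n B v).
Proof using HB Hv Hn.
  set (K := KK n B v). set (T := TT n B v). set (W := WW n B v).
  pose proof (TT_nonneg n B v HB) as HT0. fold T in HT0.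
  unfold LW. destruct (Rlt_dec W T) as [HI|HII].
  - assert (HK : (1 <= K)%nat).
    { destruct (Nat.eq_dec K 0); [|lia]. exfalso. assert (T = 0) by (unfold T, TT; fold K; rewrite e; apply prefB_0).
      destruct (Nat.eq_dec K n) as [e0|e0]. pose proof (WW_n n B v HB e0) as HW0. fold W in HW0. lra.
      destruct (WW_marg n B v HB) as [m [Hm [_ [E _]]]]. lia. fold W in E. pose proof (Hv m Hm). lra. }
    pose proof (TT_pos n B v HB HK) as HT. fold T in HT.
    assert (LWT : T <= sumR n (fun j => Rmin (v j * alloc n B v j) (B j))).
    { unfold T, TT, prefB. fold K. apply sumR_le. intros j Hj.
      rewrite alloc_eq. fold K T W. destruct (Rlt_dec W T); [|contradiction].
      pose proof (HB j Hj) as HBj.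
      destruct (Nat.ltb_spec (rank n v j) K) as [Hr|Hr].
      + pose proof (top_TT n B v HB j Hj Hr) as H0. fold T in H0.
        unfold Rmin. destruct (Rle_dec (v j * (B j / T)) (B j)); [|lra].
        assert (v j * (B j / T) >= B j).
        { replace (v j * (B j / T)) with (B j * (v j / T)) by (field; lra).
          assert (1 <= v j / T) by (apply (Rmult_le_reg_r T); auto; unfold Rdiv; rewrite Rmult_assoc, Rinv_l; lra).
          nra. }
        lra.
      + rewrite Rmult_0_r. unfold Rmin. destruct (Rle_dec 0 (B j)); lra. }
    lra.
  - assert (HKn : (K < n)%nat).
    { destruct (Nat.eq_dec K n) as [e|e]; [|pose proof (KK_le n B v HB) as HKl; fold K in HKl; lia]. exfalso.
      pose proof (WW_n n B v HB e) as H. fold W in H.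
      assert (H0 : (1 <= K)%nat) by lia.
      pose proof (TT_pos n B v HB H0) as H1. fold T in H1. lra. }
    destruct (WW_marg n B v HB HKn) as [m [Hm [Hrm [Ewm [Hgt _]]]]]. fold K T W in Hrm, Ewm, Hgt.
    assert (HW : 0 < W) by (rewrite Ewm; auto).
    assert (E : sumR n (fun j => Rmin (v j * alloc n B v j) (B j)) =
                sumR n (fun j => (if Nat.ltb (rank n v j) K then B j else 0) +
                                 (if Nat.eqb j m then W - T else 0))).
    { apply sumR_ext. intros j Hj. rewrite alloc_eq. fold K T W.
      destruct (Rlt_dec W T); [contradiction|]. pose proof (HB j Hj) as HBj.
      destruct (Nat.ltb_spec (rank n v j) K) as [Hr|Hr].
      - assert (Hjm : j <> m) by (intro X; rewrite X in Hr; lia). destruct (Nat.eqb_spec j m); [contradiction|].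
        pose proof (top_WW n B v HB j Hj Hr) as H1. fold W in H1.
        unfold Rmin. destruct (Rle_dec (v j * (B j / W)) (B j)); [|lra].
        assert (v j * (B j / W) >= B j).
        { replace (v j * (B j / W)) with (B j * (v j / W)) by (field; lra).
          assert (1 <= v j / W) by (apply (Rmult_le_reg_r W); auto; unfold Rdiv; rewrite Rmult_assoc, Rinv_l; lra).
          nra. }
        lra.
      - destruct (Nat.eqb_spec (rank n v j) K) as [Hr2|Hr2].
        + assert (j = m) by (apply (rank_inj n v); auto; lia). subst j. rewrite Nat.eqb_refl.
          rewrite <- Ewm. replace (W * (1 - T / W)) with (W - T) by (field; lra).
          unfold Rmin. destruct (Rle_dec (W - T) (B m)); lra.
        + assert (Hjm : j <> m) by (intro X; rewrite X in Hr2; lia). destruct (Nat.eqb_spec j m); [contradiction|].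
          rewrite Rmult_0_r. unfold Rmin. destruct (Rle_dec 0 (B j)); lra. }
    rewrite E, sumR_plus. rewrite (sumR_single n (fun j => if Nat.eqb j m then W - T else 0) m Hm).
    + rewrite Nat.eqb_refl. change (sumR n (fun j => if Nat.ltb (rank n v j) K then B j else 0)) with T. lra.
    + intros j _ Hj. destruct (Nat.eqb_spec j m); congruence.
Qed.

(* greedy optimum *)
Definition C j := B j / v j.
Definition g := gaux n C v n.

Lemma exists_opt : exists W, is_opt_LW n v B W.
Proof using HB Hv Hn.
  assert (HC : forall j, (j < n)%nat -> 0 < C j) by (intros j Hj; apply Rdiv_lt_0_compat; auto).
  assert (HC0 : forall j, (j < n)%nat -> 0 <= C j) by (intros j Hj; specialize (HC j Hj); lra).
  pose proof (gaux_le n C v n) as Hgn. pose proof (gaux_ok n C v n) as Hg1. fold g in Hgn, Hg1.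
  set (Sg := prefB n C v g) in *.
  assert (HS0 : 0 <= Sg) by (apply prefB_nonneg; auto).
  destruct (Nat.eq_dec g n) as [E|E].
  - (* everybody can be saturated *)
    set (y := fun j => C j + (if Nat.eqb (rank n v j) 0 then 1 - Sg else 0)).
    exists (sumR n B). split.
    + exists y. split.
      * split.
        -- intros j Hj. unfold y. specialize (HC j Hj). destruct (Nat.eqb _ _); lra.
        -- unfold y. rewrite sumR_plus.
           assert (sumR n C = Sg) by (unfold Sg; rewrite E, prefB_all; auto). rewrite H.
           destruct (rank_surj n v 0) as [a [Ha Hra]]. destruct n; [lia|lia].
           rewrite (sumR_single n _ a Ha). rewrite Hra. simpl. lra.
           intros j Hj Hne. destruct (Nat.eqb_spec (rank n v j) 0); auto.
           exfalso; apply Hne; apply (rank_inj n v); auto; lia.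
      * unfold LW. apply sumR_ext. intros j Hj. unfold y, C.
        pose proof (HB j Hj). pose proof (Hv j Hj).
        apply Rmin_right.
        assert (0 <= (if Nat.eqb (rank n v j) 0 then 1 - Sg else 0)) by (destruct (Nat.eqb _ _); lra).
        replace (v j * (B j / v j + (if Nat.eqb (rank n v j) 0 then 1 - Sg else 0)))
          with (B j + v j * (if Nat.eqb (rank n v j) 0 then 1 - Sg else 0)) by (field; lra).
        nra.
    + intros z [Hz Hs]. unfold LW. apply sumR_le. intros j Hj. apply Rmin_r.
  - assert (Hgl : (g < n)%nat) by lia.
    destruct (rank_surj n v g Hgl) as [a [Ha Hra]].
    pose proof (gaux_max n C v n (S g) ltac:(unfold g in *; lia)) as Hgt. fold g in Hgt.
    rewrite (prefB_S n C v g a Ha Hra) in Hgt. fold Sg in Hgt.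
    set (p := v a). assert (Hp : 0 < p) by (apply Hv; auto).
    set (y := fun j => if Nat.ltb (rank n v j) g then C j else if Nat.eqb j a then 1 - Sg else 0).
    set (e := fun j => if Nat.ltb (rank n v j) g then B j - p * C j else 0).
    assert (Hsum : forall f1 f2 : R, sumR n (fun j => (if Nat.ltb (rank n v j) g then f1 * B j + f2 * C j else 0)) =
                   f1 * prefB n B v g + f2 * Sg).
    { intros f1 f2. unfold Sg, prefB. rewrite <- !sumR_scal, <- sumR_plus. apply sumR_ext. intros j _.
      destruct (Nat.ltb _ _); lra. }
    assert (Hsa : forall c : R, sumR n (fun j => if Nat.eqb j a then c else 0) = c).
    { intros c. rewrite (sumR_single n _ a Ha). rewrite Nat.eqb_refl; auto.
      intros j _ Hj. destruct (Nat.eqb_spec j a); congruence. }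
    assert (Hya : forall j, (j < n)%nat -> (rank n v j < g)%nat -> j <> a).
    { intros j Hj Hr X. subst. lia. }
    exists (prefB n B v g + p * (1 - Sg)). split.
    + exists y. split.
      * split.
        -- intros j Hj. unfold y. specialize (HC j Hj). destruct (Nat.ltb _ _); [lra|]. destruct (Nat.eqb _ _); lra.
        -- unfold y. rewrite (sumR_ext n _ (fun j => (if Nat.ltb (rank n v j) g then 0 * B j + 1 * C j else 0) +
                    (if Nat.eqb j a then 1 - Sg else 0))).
           rewrite sumR_plus, Hsum, Hsa. lra.
           intros j Hj. destruct (Nat.ltb_spec (rank n v j) g) as [Hr|Hr].
           ++ pose proof (Hya j Hj Hr). destruct (Nat.eqb_spec j a); [contradiction|]. lra.
           ++ lra.
      * unfold LW. rewrite (sumR_ext n _ (fun j => (if Nat.ltb (rank n v j) g then 1 * B j + 0 * C j else 0) +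
                    (if Nat.eqb j a then p * (1 - Sg) else 0))).
        rewrite sumR_plus, Hsum, Hsa. lra.
        intros j Hj. unfold y. pose proof (HB j Hj) as HBj. pose proof (Hv j Hj) as Hvj.
        destruct (Nat.ltb_spec (rank n v j) g) as [Hr|Hr].
        -- pose proof (Hya j Hj Hr). destruct (Nat.eqb_spec j a); [contradiction|].
           unfold C. replace (v j * (B j / v j)) with (B j) by (field; lra). rewrite Rmin_left; lra.
        -- destruct (Nat.eqb_spec j a).
           ++ subst j. unfold p. rewrite Rmin_left. lra.
              assert (H0 : 1 - Sg <= C a) by lra.
              replace (B a) with (v a * C a) by (unfold C; field; lra).
              apply Rmult_le_compat_l; lra.
           ++ rewrite Rmult_0_r. rewrite Rmin_left; lra.
    + intros z [Hz Hs]. unfold LW.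
      apply Rle_trans with (sumR n (fun j => p * z j + e j)).
      * apply sumR_le. intros j Hj. unfold e. specialize (Hz j Hj). pose proof (HB j Hj). pose proof (Hv j Hj).
        destruct (Nat.ltb_spec (rank n v j) g) as [Hr|Hr].
        -- apply Rmin_term; auto. unfold p. apply (rank_le_val n v); auto. lia.
        -- pose proof (Rmin_l (v j * z j) (B j)).
           assert (v j <= p) by (unfold p; apply (rank_le_val n v); auto; lia). nra.
      * rewrite sumR_plus, sumR_scal, Hs. unfold e.
        rewrite (sumR_ext n _ (fun j => if Nat.ltb (rank n v j) g then 1 * B j + (- p) * C j else 0)).
        rewrite Hsum. lra. intros j _. destruct (Nat.ltb _ _); lra.
Qed.

End W.

Lemma upd_self b i : upd b i (b i) = b.
Proof. apply functional_extensionality. intros j. unfold upd. destruct (Nat.eqb_spec j i); subst; auto. Qed.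
Lemma upd_upd b i r u : upd (upd b i r) i u = upd b i u.
Proof. apply functional_extensionality. intros j. unfold upd. destruct (Nat.eqb_spec j i); auto. Qed.

Lemma pay_upd n B b i t : pay n B (upd b i t) i =
  t * alloc n B (upd b i t) i - integral (fun u => alloc n B (upd b i u) i) 0 t.
Proof.
  unfold pay. rewrite upd_i.
  replace (fun u => alloc n B (upd (upd b i t) i u) i) with (fun u => alloc n B (upd b i u) i); auto.
  apply functional_extensionality. intros u. rewrite upd_upd. auto.
Qed.

Theorem mainTheorem8 (n : nat) (B : nat -> R) :
  (0 < n)%nat ->
  (forall j, (j < n)%nat -> 0 < B j) ->
  (* incentive compatibility *)
  (forall (b : nat -> R) (i : nat) (vi r : R),
      (forall j, (j < n)%nat -> 0 < b j) -> (i < n)%nat -> 0 < vi -> 0 < r ->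
      ole (utility n B (upd b i r) i vi) (utility n B (upd b i vi) i vi)) /\
  (* budget feasibility of payments *)
  (forall (b : nat -> R) (i : nat),
      (forall j, (j < n)%nat -> 0 < b j) -> (i < n)%nat ->
      pay n B b i <= B i) /\
  (* 1/2-approximation of optimal liquid welfare *)
  (forall (v : nat -> R),
      (forall j, (j < n)%nat -> 0 < v j) ->
      exists W, is_opt_LW n v B W /\ LW n v B (alloc n B v) >= W / 2).
Proof.
  intros Hn HB. split; [|split].
  - intros b i vi r Hb Hi Hvi Hr.
    unfold utility.
    assert (Hpv : pay n B (upd b i vi) i <= B i).
    { rewrite pay_upd. apply pay_bound; auto. }
    destruct (Rle_dec (pay n B (upd b i r) i) (B i)) as [Hpr|Hpr]; [|simpl; auto].
    destruct (Rle_dec (pay n B (upd b i vi) i) (B i)) as [_|Hc]; [|contradiction].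
    simpl. rewrite !pay_upd.
    apply (myerson_ineq (fun u => alloc n B (upd b i u) i)); auto.
    intros x y Hx Hxy. apply alloc_mono; auto.
  - intros b i Hb Hi.
    rewrite <- (upd_self b i) at 1. rewrite pay_upd. apply pay_bound; auto.
  - intros v Hv.
    destruct (exists_opt n B v HB Hv Hn) as [W HW].
    exists W. split; auto.
    destruct HW as [[y [Hy Ey]] _].
    pose proof (LW_upper n B v HB Hv Hn y Hy).
    pose proof (LW_alloc n B v HB Hv Hn). lra.
Qed.
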